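(* For every positive integer $c\equiv3\pmod4$ there exists an $\mathrm{IHS}(7,7;c)$.
   Context: An integer Heffter array set $\mathrm{IHS}(m,n;c)$ is a collection of $c$ completely filled $m\times n$ arrays with integer entries such that the absolute values of all $mnc$ entries (taken over all $c$ arrays) are exactly $1,2,\ldots,mnc$, each occurring exactly once, and in every array the entries of each row and of each column sum to $0$. *)

(* Defs.v *)
From mathcomp Require Import all_boot all_order all_algebra.
Set Implicit Arguments. Unset Strict Implicit. Unset Printing Implicit Defensive.
Import Order.TTheory GRing.Theory Num.Theory.

Definition is_IHS (m n c : nat) (A : 'I_c -> 'M[int]_(m, n)) : Prop :=
  [/\ perm_eq [seq `|A t.1 t.2.1 t.2.2|%N | t : 'I_c * ('I_m * 'I_n)]
              (iota 1 (m * n * c)),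
      (forall k i, (\sum_(j < n) A k i j = 0)%R) &
      (forall k j, (\sum_(i < m) A k i j = 0)%R)].

Definition IHS_exists (m n c : nat) : Prop :=
  exists A : 'I_c -> 'M[int]_(m, n), is_IHS A.

(* Main.v *)
Require Import Defs.
From mathcomp Require Import all_boot all_order all_algebra.
From mathcomp Require Import zify.
Set Implicit Arguments. Unset Strict Implicit. Unset Printing Implicit Defensive.
Import Order.TTheory GRing.Theory Num.Theory.

Definition lamT : seq (seq nat) := [:: [:: 25; 27; 37; 30; 9; 16; 2]; [:: 20; 22; 42; 14; 10; 24; 28]; [:: 4; 5; 36; 41; 8; 21; 17]; [:: 18; 31; 6; 38; 44; 13; 0]; [:: 40; 48; 19; 3; 43; 46; 11]; [:: 26; 32; 29; 23; 1; 34; 35]; [:: 45; 15; 47; 39; 7; 12; 33]].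

Definition roleT : seq (seq nat) := [:: [:: 1; 2; 4; 6; 3; 5; 0]; [:: 0; 1; 2; 4; 6; 3; 5]; [:: 5; 0; 1; 2; 4; 6; 3]; [:: 3; 5; 0; 1; 2; 4; 6]; [:: 6; 3; 5; 0; 1; 2; 4]; [:: 4; 6; 3; 5; 0; 1; 2]; [:: 2; 4; 6; 3; 5; 0; 1]].

Definition grho (r j u k : nat) : nat :=
  match r, j with
  | 0, 0 => 1 * k + 1 + 1 * u + 0
  | 0, 1 => 2 * k + 1 + 1 * u + 0
  | 0, 2 => 0 * k + 1 + 1 * (k - 1 - u) + 0
  | 0, 3 => 3 * k + 2 + 1 * (k - 1 - u) + 0
  | 1, 0 => 2 * k + 2 + 1 * u + 0
  | 1, 1 => 0 * k + 0 + 1 * (k - 1 - u) + 0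
  | 1, 2 => 1 * k + 0 + 1 * u + 0
  | 1, 3 => 3 * k + 2 + 1 * u + 0
  | 2, 0 => 0 * k + 1 + 2 * u + 1
  | 2, 1 => 0 * k + 1 + 2 * u + 0
  | 2, 2 => 2 * k + 1 + 2 * (k - 1 - u) + 0
  | 2, 3 => 2 * k + 1 + 2 * (k - 1 - u) + 1
  | 3, 0 => 1 * k + 0 + 1 * (k - 1 - u) + 0
  | 3, 1 => 2 * k + 0 + 1 * (k - 1 - u) + 0
  | 3, 2 => 3 * k + 1 + 1 * u + 0
  | 3, 3 => 0 * k + 0 + 1 * (k - 1 - u) + 0
  | 4, 0 => 2 * k + 3 + 1 * u + 0
  | 4, 1 => 3 * k + 3 + 1 * (k - 1 - u) + 0
  | 4, 2 => 0 * k + 2 + 1 * (k - 1 - u) + 0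
  | 4, 3 => 1 * k + 2 + 1 * (k - 1 - u) + 0
  | 5, 0 => 0 * k + 0 + 1 * (k - 1 - u) + 0
  | 5, 1 => 2 * k + 0 + 1 * u + 0
  | 5, 2 => 1 * k + 0 + 1 * (k - 1 - u) + 0
  | 5, 3 => 3 * k + 3 + 1 * (k - 1 - u) + 0
  | 6, 0 => 0 * k + 1 + 1 * u + 0
  | 6, 1 => 1 * k + 2 + 1 * (k - 1 - u) + 0
  | 6, 2 => 3 * k + 2 + 1 * (k - 1 - u) + 0
  | 6, 3 => 2 * k + 2 + 1 * u + 0
  | _, _ => 0
  end.

Definition srho (r s k : nat) : nat :=
  match r, s with
  | 0, 0 => 0 * k + 0
  | 0, 1 => 4 * k + 2
  | 0, 2 => 3 * k + 1
  | 1, 0 => 2 * k + 1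
  | 1, 1 => 4 * k + 2
  | 1, 2 => 2 * k + 0
  | 2, 0 => 0 * k + 0
  | 2, 1 => 4 * k + 2
  | 2, 2 => 4 * k + 1
  | 3, 0 => 4 * k + 1
  | 3, 1 => 3 * k + 0
  | 3, 2 => 4 * k + 2
  | 4, 0 => 2 * k + 2
  | 4, 1 => 0 * k + 0
  | 4, 2 => 0 * k + 1
  | 5, 0 => 3 * k + 0
  | 5, 1 => 3 * k + 1
  | 5, 2 => 3 * k + 2
  | 6, 0 => 1 * k + 1
  | 6, 1 => 4 * k + 2
  | 6, 2 => 0 * k + 0
  | _, _ => 0
  end.

Definition sgnT : seq (seq bool) := [:: [:: true; true; false; false; false; true; true]; [:: true; true; false; false; false; true; true]; [:: true; true; false; false; false; true; true]; [:: true; true; false; true; true; false; false]; [:: true; true; false; false; false; true; true]; [:: true; true; false; true; true; false; false]; [:: true; true; false; false; false; true; true]].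
Definition posIT : seq nat := [:: 3; 5; 0; 4; 2; 2; 3; 6; 2; 0; 1; 4; 6; 3; 1; 6; 0; 2; 3; 4; 1; 2; 1; 5; 1; 0; 5; 0; 1; 5; 0; 3; 5; 6; 5; 5; 2; 0; 3; 6; 4; 2; 1; 4; 3; 6; 4; 6; 4].
Definition posJT : seq nat := [:: 6; 4; 6; 3; 0; 1; 2; 4; 4; 4; 4; 6; 5; 5; 3; 1; 5; 6; 0; 2; 0; 5; 1; 3; 5; 0; 0; 1; 6; 2; 3; 1; 1; 6; 5; 6; 2; 2; 3; 3; 0; 3; 2; 4; 4; 0; 5; 2; 1].

Definition lam (i j : nat) : nat := nth 0 (nth [::] lamT i) j.
Definition role (i j : nat) : nat := nth 0 (nth [::] roleT i) j.
Definition sg (T r : nat) : int := if nth false (nth [::] sgnT T) r then 1%R else (-1)%R.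
Definition posI (x : nat) : nat := nth 0 posIT x.
Definition posJ (x : nat) : nat := nth 0 posJT x.

Lemma row_g k u j0 i : u < k -> j0 < 4 -> i < 7 ->
  (\sum_(j < 7) sg j0 (role i j) * Posz ((4*k+3) * lam i j + grho (role i j) j0 u k + 1) = 0)%R.
Proof.
move=> Hu Hj Hi.
rewrite !big_ord_recr big_ord0 /=.
do 7?[case: i Hi => [|i] Hi]; do 4?[case: j0 Hj => [|j0] Hj] => //; rewrite /sg /role /lam /=; lia.
Qed.

Lemma col_g k u j0 j : u < k -> j0 < 4 -> j < 7 ->
  (\sum_(i < 7) sg j0 (role i j) * Posz ((4*k+3) * lam i j + grho (role i j) j0 u k + 1) = 0)%R.
Proof.
move=> Hu Hj0 Hj.
rewrite !big_ord_recr big_ord0 /=.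
do 7?[case: j Hj => [|j] Hj]; do 4?[case: j0 Hj0 => [|j0] Hj0] => //; rewrite /sg /role /lam /=; lia.
Qed.

Lemma row_s k s i : s < 3 -> i < 7 ->
  (\sum_(j < 7) sg (4 + s) (role i j) * Posz ((4*k+3) * lam i j + srho (role i j) s k + 1) = 0)%R.
Proof.
move=> Hs Hi.
rewrite !big_ord_recr big_ord0 /=.
do 7?[case: i Hi => [|i] Hi]; do 3?[case: s Hs => [|s] Hs] => //; rewrite /sg /role /lam /=; lia.
Qed.

Lemma col_s k s j : s < 3 -> j < 7 ->
  (\sum_(i < 7) sg (4 + s) (role i j) * Posz ((4*k+3) * lam i j + srho (role i j) s k + 1) = 0)%R.
Proof.
move=> Hs Hj.
rewrite !big_ord_recr big_ord0 /=.
do 7?[case: j Hj => [|j] Hj]; do 3?[case: s Hs => [|s] Hs] => //; rewrite /sg /role /lam /=; lia.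
Qed.

Definition rho (r k t : nat) : nat :=
  if t < 4 * k then grho r (t %% 4) (t %/ 4) k else srho r (t - 4 * k) k.
Definition typ (k t : nat) : nat := if t < 4 * k then t %% 4 else 4 + (t - 4 * k).
Definition ent (k t i j : nat) : int :=
  sg (typ k t) (role i j) * Posz ((4*k+3) * lam i j + rho (role i j) k t + 1).

Lemma row_ent k t i : t < 4 * k + 3 -> i < 7 -> (\sum_(j < 7) ent k t i j = 0)%R.
Proof.
move=> Ht Hi; rewrite /ent /typ /rho.
case: ifP => H.
  apply: row_g => //; [lia | by rewrite ltn_mod].
have -> : t = 4 * k + (t - 4 * k) by lia.
rewrite (_ : 4 * k + (t - 4 * k) - 4 * k = t - 4 * k); last by lia.
apply: row_s => //; lia.
Qed.

Lemma col_ent k t j : t < 4 * k + 3 -> j < 7 -> (\sum_(i < 7) ent k t i j = 0)%R.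
Proof.
move=> Ht Hj; rewrite /ent /typ /rho.
case: ifP => H.
  apply: col_g => //; [lia | by rewrite ltn_mod].
have -> : t = 4 * k + (t - 4 * k) by lia.
rewrite (_ : 4 * k + (t - 4 * k) - 4 * k = t - 4 * k); last by lia.
apply: col_s => //; lia.
Qed.

Lemma role_lt i j : i < 7 -> j < 7 -> role i j < 7.
Proof. by move=> Hi Hj; do 7?[case: i Hi => [|i] Hi]; do 7?[case: j Hj => [|j] Hj]. Qed.

Lemma lam_le i j : i < 7 -> j < 7 -> lam i j <= 48.
Proof. by move=> Hi Hj; do 7?[case: i Hi => [|i] Hi]; do 7?[case: j Hj => [|j] Hj]. Qed.

Lemma pos_lam i j : i < 7 -> j < 7 -> posI (lam i j) = i /\ posJ (lam i j) = j.
Proof. by move=> Hi Hj; do 7?[case: i Hi => [|i] Hi]; do 7?[case: j Hj => [|j] Hj]. Qed.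

Lemma rho_lt r k t : r < 7 -> t < 4 * k + 3 -> rho r k t < 4 * k + 3.
Proof.
move=> Hr Ht; rewrite /rho; case: ifP => H.
  have Hu : t %/ 4 < k by lia.
  have Hj : t %% 4 < 4 by rewrite ltn_mod.
  move: (t %% 4) (t %/ 4) Hj Hu => j u Hj Hu.
  by do 7?[case: r Hr => [|r] Hr]; do 4?[case: j Hj => [|j] Hj] => //=; lia.
have Hs : t - 4 * k < 3 by lia.
move: (t - 4 * k) Hs => s Hs.
by do 7?[case: r Hr => [|r] Hr]; do 3?[case: s Hs => [|s] Hs] => //=; lia.
Qed.

Lemma rho_inj r k t t' : r < 7 -> t < 4 * k + 3 -> t' < 4 * k + 3 ->
  rho r k t = rho r k t' -> t = t'.
Proof.
move=> Hr Ht Ht'; rewrite /rho.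
case: ifP => H; case: ifP => H'.
- have Et := divn_eq t 4; have Et' := divn_eq t' 4.
  have Hu : t %/ 4 < k by lia.
  have Hu' : t' %/ 4 < k by lia.
  have Hj : t %% 4 < 4 by rewrite ltn_mod.
  have Hj' : t' %% 4 < 4 by rewrite ltn_mod.
  move: (t %% 4) (t %/ 4) (t' %% 4) (t' %/ 4) Hj Hu Hj' Hu' Et Et' => j u j' u' Hj Hu Hj' Hu' Et Et'.
  by do 7?[case: r Hr => [|r] Hr]; do 4?[case: j Hj Et => [|j] Hj Et]; do 4?[case: j' Hj' Et' => [|j'] Hj' Et'] => //=; lia.
- have Et := divn_eq t 4.
  have Hu : t %/ 4 < k by lia.
  have Hj : t %% 4 < 4 by rewrite ltn_mod.
  have -> : t' = 4 * k + (t' - 4 * k) by lia.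
  have Hs : t' - 4 * k < 3 by lia.
  rewrite (_ : 4 * k + (t' - 4 * k) - 4 * k = t' - 4 * k); last by lia.
  move: (t %% 4) (t %/ 4) (t' - 4 * k) Hj Hu Hs Et => j u s Hj Hu Hs Et.
  by do 7?[case: r Hr => [|r] Hr]; do 4?[case: j Hj Et => [|j] Hj Et]; do 3?[case: s Hs => [|s] Hs] => //=; lia.
- have Et := divn_eq t' 4.
  have Hu : t' %/ 4 < k by lia.
  have Hj : t' %% 4 < 4 by rewrite ltn_mod.
  have -> : t = 4 * k + (t - 4 * k) by lia.
  have Hs : t - 4 * k < 3 by lia.
  rewrite (_ : 4 * k + (t - 4 * k) - 4 * k = t - 4 * k); last by lia.
  move: (t' %% 4) (t' %/ 4) (t - 4 * k) Hj Hu Hs Et => j u s Hj Hu Hs Et.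
  by do 7?[case: r Hr => [|r] Hr]; do 4?[case: j Hj Et => [|j] Hj Et]; do 3?[case: s Hs => [|s] Hs] => //=; lia.
- have -> : t = 4 * k + (t - 4 * k) by lia.
  have -> : t' = 4 * k + (t' - 4 * k) by lia.
  have Hs : t - 4 * k < 3 by lia.
  have Hs' : t' - 4 * k < 3 by lia.
  rewrite (_ : 4 * k + (t - 4 * k) - 4 * k = t - 4 * k); last by lia.
  rewrite (_ : 4 * k + (t' - 4 * k) - 4 * k = t' - 4 * k); last by lia.
  move: (t - 4 * k) (t' - 4 * k) Hs Hs' => s s' Hs Hs'.
  by do 7?[case: r Hr => [|r] Hr]; do 3?[case: s Hs => [|s] Hs]; do 3?[case: s' Hs' => [|s'] Hs'] => //=; lia.
Qed.

Lemma absz_sg T r v : `|(sg T r * Posz v)%R|%N = v.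
Proof. by rewrite /sg; case: ifP => _; rewrite ?mul1r ?mulN1r ?abszN. Qed.

Lemma perm_iota (T : finType) (f : T -> nat) N :
  injective f -> (forall x, 0 < f x <= N) -> #|T| = N ->
  perm_eq [seq f x | x : T] (iota 1 N).
Proof.
move=> finj frange cardT.
have U : uniq [seq f x | x : T] by rewrite /image_mem map_inj_uniq ?enum_uniq.
have Sub : {subset [seq f x | x : T] <= iota 1 N}.
  move=> y /mapP [x _ ->]; rewrite mem_iota; have := frange x; lia.
have Hsz : size (iota 1 N) <= size [seq f x | x : T].
  by rewrite size_iota size_map -cardE cardT.
have [_ E] := uniq_min_size U Sub Hsz.
by apply: uniq_perm => //; apply: iota_uniq.
Qed.

Theorem proposition3p6 (c : nat) : 0 < c -> c %% 4 = 3 -> IHS_exists 7 7 c.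
Proof.
move=> Hc Hm.
set k := c %/ 4.
have Hck : c = 4 * k + 3 by rewrite {1}(divn_eq c 4) Hm /k; lia.
exists (fun t : 'I_c => (\matrix_(i, j) ent k t i j : 'M[int]_(7, 7))%R).
split.
- apply: perm_iota.
  + move=> [t [i j]] [t' [i' j']]; rewrite /= !mxE /ent !absz_sg => E.
    have Hr := role_lt (ltn_ord i) (ltn_ord j).
    have Hr' := role_lt (ltn_ord i') (ltn_ord j').
    have Ht : t < 4 * k + 3 by rewrite -Hck.
    have Ht' : t' < 4 * k + 3 by rewrite -Hck.
    have Hrho := rho_lt Hr Ht.
    have Hrho' := rho_lt Hr' Ht'.
    have El : lam i j = lam i' j'.
      have := congr1 (fun x => (x - 1) %/ (4 * k + 3)) E.
      have H0 : 0 < 4 * k + 3 by lia.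
      by rewrite /= !addnK !(mulnC (4 * k + 3)) !(divnMDl _ _ H0) (divn_small Hrho) (divn_small Hrho') !addn0.
    have [Pi Pj] := pos_lam (ltn_ord i) (ltn_ord j).
    have [Pi' Pj'] := pos_lam (ltn_ord i') (ltn_ord j').
    have ei : i = i' by apply: val_inj; rewrite /= -Pi El Pi'.
    have ej : j = j' by apply: val_inj; rewrite /= -Pj El Pj'.
    subst i' j'.
    have : (t : nat) = t'.
      apply: (rho_inj Hr Ht Ht'); move: E; lia.
    by move/val_inj => ->.
  + move=> [t [i j]]; rewrite /= mxE /ent absz_sg.
    have Hr := role_lt (ltn_ord i) (ltn_ord j).
    have Ht : t < 4 * k + 3 by rewrite -Hck.
    have Hrho := rho_lt Hr Ht.
    have Hl := lam_le (ltn_ord i) (ltn_ord j).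
    nia.
  + by rewrite card_prod card_prod !card_ord mulnC.
- move=> t i; under eq_bigr do rewrite mxE.
  apply: row_ent => //; rewrite -Hck; exact: ltn_ord.
- move=> t j; under eq_bigr do rewrite mxE.
  apply: col_ent => //; rewrite -Hck; exact: ltn_ord.
Qed.
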